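(* For $x=(x_1,x_2),y=(y_1,y_2)\in\mathbb R^2$ define $$d_1(x,y)=|x_1-y_1|+\tan^{-1}(|x_2-y_2|),\qquad d_2(x,y)=|x_2-y_2|+\tan^{-1}(|x_1-y_1|).$$ Then $(\mathbb R^2,d_1)$ and $(\mathbb R^2,d_2)$ are Gromov hyperbolic with $\delta=\pi/2$, but $(\mathbb R^2,d)$ with $d=d_1+d_2$ is not Gromov hyperbolic (for any $\delta\ge0$).
   Context: A metric space $(Y,\rho)$ is Gromov hyperbolic with constant $\delta\ge 0$ if $\rho(x,y)+\rho(z,v)\leq \max\{\rho(x,z)+\rho(y,v),\ \rho(x,v)+\rho(y,z)\}+2\delta$ for all $x,y,z,v\in Y$; it is Gromov hyperbolic if this holds for some $\delta\ge0$. Here $d_1,d_2$ are metrics on $\mathbb R^2$. *)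

(* Defs.v *)
From Stdlib Require Import Reals.
Open Scope R_scope.

Definition gromov_hyperbolic_with {Y : Type} (rho : Y -> Y -> R) (delta : R) : Prop :=
  0 <= delta /\
  forall x y z v : Y,
    rho x y + rho z v <= Rmax (rho x z + rho y v) (rho x v + rho y z) + 2 * delta.

Definition gromov_hyperbolic {Y : Type} (rho : Y -> Y -> R) : Prop :=
  exists delta : R, gromov_hyperbolic_with rho delta.

Definition dist1 (x y : R * R) : R :=
  Rabs (fst x - fst y) + atan (Rabs (snd x - snd y)).

Definition dist2 (x y : R * R) : R :=
  Rabs (snd x - snd y) + atan (Rabs (fst x - fst y)).

Definition dist12 (x y : R * R) : R := dist1 x y + dist2 x y.

(* Main.v *)
Require Import Defs.
From Stdlib Require Import Reals Lra.
Open Scope R_scope.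

Lemma four_line (a b c d : R) :
  Rabs (a - b) + Rabs (c - d) <= Rabs (a - c) + Rabs (b - d) \/
  Rabs (a - b) + Rabs (c - d) <= Rabs (a - d) + Rabs (b - c).
Proof.
  destruct (Rle_lt_dec (Rabs (a - b) + Rabs (c - d)) (Rabs (a - c) + Rabs (b - d))) as [H|H]; [left; exact H|right].
  apply Rnot_lt_le; intro H2; revert H H2.
  unfold Rabs; repeat destruct Rcase_abs; intros; lra.
Qed.

Lemma atan_nonneg x : 0 <= x -> 0 <= atan x.
Proof.
  intros [H|H]. - rewrite <- atan_0; left; apply atan_increasing; exact H.
  - subst; rewrite atan_0; lra.
Qed.

Lemma atan_abs_bd x : 0 <= atan (Rabs x) < PI / 2.
Proof.
  split. apply atan_nonneg, Rabs_pos. apply atan_bound.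
Qed.

Lemma gen (A1 A2 A3 A4 A5 A6 B1 B2 B3 B4 B5 B6 : R) :
  (A1 + A2 <= A3 + A4 \/ A1 + A2 <= A5 + A6) ->
  0 <= B1 < PI/2 -> 0 <= B2 < PI/2 -> 0 <= B3 < PI/2 ->
  0 <= B4 < PI/2 -> 0 <= B5 < PI/2 -> 0 <= B6 < PI/2 ->
  (A1 + B1) + (A2 + B2) <= Rmax ((A3 + B3) + (A4 + B4)) ((A5 + B5) + (A6 + B6)) + 2 * (PI / 2).
Proof.
  intros [H|H] ? ? ? ? ? ?.
  - eapply Rle_trans; [|apply Rplus_le_compat_r; apply Rmax_l]; lra.
  - eapply Rle_trans; [|apply Rplus_le_compat_r; apply Rmax_r]; lra.
Qed.

Theorem lemma4p4 :
  gromov_hyperbolic_with dist1 (PI / 2) /\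
  gromov_hyperbolic_with dist2 (PI / 2) /\
  ~ gromov_hyperbolic dist12.
Proof.
  pose proof PI_RGT_0.
  split; [|split].
  - split; [lra|]. intros x y z v; unfold dist1.
    apply gen; try apply atan_abs_bd. apply four_line.
  - split; [lra|]. intros x y z v; unfold dist2.
    apply gen; try apply atan_abs_bd. apply four_line.
  - intros [dl [Hd H1]].
    set (t := dl + 1).
    specialize (H1 (0,0) (t,t) (t,0) (0,t)).
    unfold dist12, dist1, dist2 in H1; simpl in H1.
    replace (0 - t) with (- t) in H1 by ring.
    replace (t - t) with 0 in H1 by ring.
    replace (0 - 0) with 0 in H1 by ring.
    replace (t - 0) with t in H1 by ring.
    rewrite Rabs_Ropp, Rabs_R0, atan_0 in H1.
    rewrite (Rabs_right t) in H1 by (unfold t; lra).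
    assert (0 <= atan t) by (apply atan_nonneg; unfold t; lra).
    rewrite Rmax_left in H1 by lra.
    unfold t in *; lra.
Qed.
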